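(* In the setting described in the context, let $p$ be a facet of $\Delta_\lambda$ of $\mathbf a$-degree at least $1$. Then the simplicial complex $F_{<p}\cap p$ has dimension $\dim\Delta_\lambda-1=|\lambda|-3$.
   Context: Let $n,d\ge2$, $V(n,d)=\{\mathbf b\in\mathbb N^n:\sum_i b_i=d\}$, and let $\mathbf a\in V(n,d)$ satisfy $a_1\le a_2\le\dots\le a_n$ and $\mathbf a\notin\{(0,\dots,0,d),(0,\dots,0,1,d-1),(0,\dots,0,2,d-2)\}$. Let $\Gamma=V(n,d)\setminus\{\mathbf a\}$ and assume $\Gamma+\Gamma=V(n,2d)$. Order $V(n,d)$ lexicographically ($b<c$ iff the first nonzero coordinate of $c-b$ is positive). Let $\lambda$ be in the semigroup generated by $\Gamma$, and $|\lambda|=(\sum_i\lambda_i)/d=:k$. A closed chain from $0$ to $\lambda$ with links in $V(n,d)$ is a sequence $0=v_0,v_1,\dots,v_k=\lambda$ in $\mathbb N^n$ with $v_j-v_{j-1}\in V(n,d)$ for all $j$; its links are $v_j-v_{j-1}$ and its $\mathbf a$-degree is the number of links equal to $\mathbf a$; its open chain is the set $\{v_1,\dots,v_{k-1}\}$. $\Delta_\lambda$ is the simplicial complex on $\mathbb N^n$ whose facets are the open chains of all such closed chains (it is pure of dimension $|\lambda|-2$); $\Gamma_\lambda$ is the subcomplex generated by the open chains of closed chains all of whose links lie in $\Gamma$. Facets are ordered: $q<p$ iff the $\mathbf a$-degree of $q$ is smaller than that of $p$, or they are equal and the sequence of links of $q$ is lexicographically smaller than that of $p$ (comparing first links first, using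 the order on $V(n,d)$). For a facet $p$, $F_{<p}$ is the subcomplex of $\Delta_\lambda$ generated by all facets $q<p$, and $p$ also denotes the full simplex on its vertex set. *)

(* Defs.v *)
From mathcomp Require Import all_boot all_order all_algebra.
Set Implicit Arguments. Unset Strict Implicit. Unset Printing Implicit Defensive.

Definition vec (n : nat) := {ffun 'I_n -> nat}.

Definition vdeg n (b : vec n) : nat := \sum_(i < n) b i.

Definition inV n d (b : vec n) : bool := vdeg b == d.

Definition vadd n (b c : vec n) : vec n := [ffun i => b i + c i].

Definition vsum n (s : seq (vec n)) : vec n := [ffun i => \sum_(x <- s) x i].

Definition lexlt n (b c : vec n) : bool :=
  [exists i : 'I_n, [forall j : 'I_n, (j < i)%N ==> (b j == c j)] && (b i < c i)%N].

Fixpoint seqlt n (s t : seq (vec n)) : bool :=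
  match s, t with
  | x :: s', y :: t' => lexlt x y || ((x == y) && seqlt s' t')
  | _, _ => false
  end.

(* a closed chain from 0 to lam with links in V(n,d), given by its sequence
   of links v_1 - v_0, ..., v_k - v_{k-1} *)
Definition closed_chain n d (lam : vec n) (s : seq (vec n)) : bool :=
  all (@inV n d) s && (vsum s == lam).

Definition adeg n (a : vec n) (s : seq (vec n)) : nat := count_mem a s.

(* the open chain {v_1, ..., v_{k-1}} (v_j = sum of the first j links) *)
Definition open_chain n (s : seq (vec n)) : seq (vec n) :=
  [seq vsum (take j s) | j <- iota 1 (size s).-1].

Definition facet_lt n (a : vec n) (q p : seq (vec n)) : bool :=
  (adeg a q < adeg a p)%N || ((adeg a q == adeg a p) && seqlt q p).

Definition face_Flt_cap n d (a lam : vec n) (p : seq (vec n)) (sigma : seq (vec n)) : Prop :=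
  {subset sigma <= open_chain p} /\
  exists q, closed_chain d lam q /\ facet_lt a q p /\ {subset sigma <= open_chain q}.

(* a simplicial complex (given by its faces, as duplicate-free vertex lists)
   has dimension m: maximal face has m+1 vertices *)
Definition has_dim (T : eqType) (K : seq T -> Prop) (m : int) : Prop :=
  (exists sigma, uniq sigma /\ K sigma /\ ((size sigma)%:Z = m + 1)%R) /\
  (forall sigma, uniq sigma -> K sigma -> ((size sigma)%:Z <= m + 1)%R).

Definition excl_vec n (c d : nat) : vec n :=
  [ffun i : 'I_n => if val i == n.-1 then d - c
                    else if val i == n.-2 then c else 0].

(* Main.v *)
Require Import Defs.
From mathcomp Require Import all_boot all_order all_algebra zify.
Set Implicit Arguments. Unset Strict Implicit. Unset Printing Implicit Defensive.

Section H.
Variable n : nat.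
Implicit Types (x y : vec n) (s t : seq (vec n)).

Lemma vsum_nil : vsum [::] = [ffun _ => 0] :> vec n.
Proof. by apply/ffunP => i; rewrite !ffunE big_nil. Qed.

Lemma vsum_cons x s : vsum (x :: s) = vadd x (vsum s).
Proof. by apply/ffunP => i; rewrite !ffunE big_cons. Qed.

Lemma vsum_cat s t : vsum (s ++ t) = vadd (vsum s) (vsum t).
Proof. by apply/ffunP => i; rewrite !ffunE big_cat. Qed.

Lemma vsum1 x : vsum [:: x] = x.
Proof. by apply/ffunP => i; rewrite vsum_cons vsum_nil !ffunE addn0. Qed.

Lemma vsum2 x y t : vsum (x :: y :: t) = vadd (vadd x y) (vsum t).
Proof. by apply/ffunP => i; rewrite !vsum_cons !ffunE addnA. Qed.

Lemma vdeg_vadd x y : vdeg (vadd x y) = vdeg x + vdeg y.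
Proof. rewrite /vdeg -big_split; apply: eq_bigr => i _; by rewrite ffunE. Qed.

Lemma vdeg_vsum d s : all (@inV n d) s -> vdeg (vsum s) = size s * d.
Proof.
elim: s => [|x s IH] /=.
  by rewrite vsum_nil /vdeg big1 // => i _; rewrite ffunE.
by move=> /andP[/eqP Hx Hs]; rewrite vsum_cons vdeg_vadd IH // Hx mulSn.
Qed.

Lemma vdeg_take d s j : all (@inV n d) s -> j <= size s -> vdeg (vsum (take j s)) = j * d.
Proof.
move=> Hs Hj; rewrite (@vdeg_vsum d) ?size_takel //.
by move: Hs; rewrite -{1}(cat_take_drop j s) all_cat => /andP[].
Qed.

Lemma prefix_eq s t : size s = size t -> (forall j, vsum (take j s) = vsum (take j t)) -> s = t.
Proof.
elim: s t => [|x s IH] [|y t] //= [Hsz] H.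
have Hxy : x = y by have := H 1; rewrite /= !take0 !vsum1.
subst y; congr cons; apply: IH => // j.
have := H j.+1; rewrite /= !vsum_cons => /ffunP E; apply/ffunP => i.
by have := E i; rewrite !ffunE => /addnI.
Qed.

Lemma lexlt_irr x : lexlt x x = false.
Proof. by apply/existsP => -[i /andP[_]]; rewrite ltnn. Qed.

Lemma seqlt_irr s : seqlt s s = false.
Proof. by elim: s => //= x s ->; rewrite lexlt_irr eqxx. Qed.

Lemma open_chainP d s x : 0 < d -> all (@inV n d) s -> x \in open_chain s ->
  exists j, [/\ 0 < j, j < size s & x = vsum (take j s)].
Proof.
move=> _ _ /mapP[j]; rewrite mem_iota => /andP[H1 H2] ->; exists j; split => //.
by move: H1 H2; case: (size s) => //= m; lia.
Qed.

Lemma open_chain_uniq d s : 0 < d -> all (@inV n d) s -> uniq (open_chain s).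
Proof.
move=> d0 Hs; rewrite map_inj_in_uniq ?iota_uniq // => i j.
rewrite !mem_iota => /andP[_ Hi] /andP[_ Hj] E.
have Hi' : i <= size s by move: Hi; case: (size s) => //= m; lia.
have Hj' : j <= size s by move: Hj; case: (size s) => //= m; lia.
have := congr1 (@vdeg n) E; rewrite !(@vdeg_take d) //.
by move/eqP; rewrite eqn_pmul2r // => /eqP.
Qed.

Lemma take_swap s1 s2 y1 y2 x1 x2 j : vadd y1 y2 = vadd x1 x2 -> j != (size s1).+1 ->
  vsum (take j (s1 ++ y1 :: y2 :: s2)) = vsum (take j (s1 ++ x1 :: x2 :: s2)).
Proof.
move=> E Hj; rewrite !take_cat; case: ltnP => h //.
rewrite !vsum_cat; congr vadd.
case E2: (j - size s1) => [|[|m]] //.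
  by exfalso; move: Hj => /eqP; apply; lia.
by rewrite /= !vsum2 E.
Qed.

Lemma split_a (a : vec n) p : a \in p -> 2 <= size p ->
  exists s1 y1 y2 s2, p = s1 ++ y1 :: y2 :: s2 /\ ((y1 == a) || (y2 == a)).
Proof.
case/splitPr => s1 [|y s2].
  case/lastP: s1 => [|s1 y] //= _.
  by exists s1, y, a, [::]; rewrite cat_rcons eqxx orbT.
by move=> _; exists s1, a, y, s2; rewrite eqxx.
Qed.
End H.

Open Scope ring_scope.
Lemma ar1 k : ((k.+2).-1.-1)%:Z = ((k.+2)%:Z - 3 + 1)%R.
Proof. lia. Qed.
Lemma ar2 (b1 b2 : bool) (c1 c2 : nat) : b1 || b2 -> (c1 + (0 + (0 + c2)) < c1 + (b1 + (b2 + c2)))%N.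
Proof. by case: b1; case: b2 => //= _; lia. Qed.
Lemma ar3 (m k : nat) : (m <= k)%N -> (m%:Z <= (k.+2)%:Z - 3 + 1)%R.
Proof. lia. Qed.
Lemma ar4 (j k : nat) : (0 < j)%N -> (j < k)%N -> (1 <= j < 1 + k.-1)%N.
Proof. lia. Qed.

Close Scope ring_scope.
Theorem lemma3p1 (n d : nat) (a lam : vec n) (p : seq (vec n)) :
  (2 <= n)%N -> (2 <= d)%N ->
  inV d a ->
  (forall i j : 'I_n, (i <= j)%N -> (a i <= a j)%N) ->
  a != excl_vec n 0 d -> a != excl_vec n 1 d -> a != excl_vec n 2 d ->
  (* Gamma + Gamma = V(n,2d), with Gamma = V(n,d) \ {a} *)
  (forall c : vec n, inV (2 * d) c <->
     exists x y : vec n, [/\ inV d x, x != a, inV d y, y != a & c = vadd x y]) ->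
  (* lam in the semigroup generated by Gamma *)
  (exists s : seq (vec n),
     [/\ (0 < size s)%N, all (fun b => inV d b && (b != a)) s & vsum s = lam]) ->
  (* p is a facet of Delta_lam (given by its closed chain) of a-degree >= 1 *)
  closed_chain d lam p -> (1 <= adeg a p)%N ->
  has_dim (face_Flt_cap d a lam p) (((vdeg lam %/ d)%N)%:Z - 3)%R.
Proof.
move=> n2 d2 Ha _ _ _ _ HG [s [s0 Hs Hsl]] /andP[Hp /eqP Hpl] Had.
have d0 : 0 < d by lia.
have Hdl : vdeg lam = size p * d by rewrite -Hpl (vdeg_vsum Hp).
have Hk : vdeg lam %/ d = size p by rewrite Hdl mulnK.
rewrite Hk.
have aP : a \in p by rewrite -has_pred1 has_count; move: Had; rewrite /adeg.
have Hs' : all (inV d) s by apply/allP => x /(allP Hs) /andP[].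
have Hss : size s = size p.
  by apply/eqP; rewrite -(eqn_pmul2r d0) -(vdeg_vsum Hs') Hsl Hdl.
have k2 : 2 <= size p.
  case Ep: p aP Hss Hpl => [|y [|z t]] //.
  rewrite inE => /eqP <-; case: s s0 Hs Hsl {Hs'} => [|b [|]] //= _.
  by rewrite andbT !vsum1 => /andP[_ /negP Hb] Hb' _ Ha'; exfalso; apply: Hb; rewrite Hb' -Ha'.
split.
-
  have [s1 [y1 [y2 [s2 [Ep Hy]]]]] := split_a aP k2.
  have Hy12 : inV (2 * d) (vadd y1 y2).
    move: Hp; rewrite Ep all_cat /= => /and3P[_ /eqP H1 /andP[/eqP H2 _]].
    by rewrite /inV vdeg_vadd H1 H2 mul2n addnn.
  have [x1 [x2 [Hx1 Hxa1 Hx2 Hxa2 Exy]]] := (HG _).1 Hy12.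
  pose q := s1 ++ x1 :: x2 :: s2.
  pose v := vsum (take (size s1).+1 p).
  have ocU := open_chain_uniq d0 Hp.
  have vin : v \in open_chain p.
    apply/mapP; exists (size s1).+1 => //; rewrite mem_iota Ep size_cat /= !addnS /= add1n !ltnS leq_addr //.
  exists (rem v (open_chain p)).
  split; first exact: rem_uniq.
  split; last first.
    rewrite size_rem // size_map size_iota; move: k2; case: (size p) => [|[|k]] // _.
    exact: ar1.
  split; first by move=> x /mem_rem.
  exists q; split.
    rewrite /closed_chain; apply/andP; split.
      by move: Hp; rewrite Ep !all_cat /= Hx1 Hx2 => /and3P[-> _ /andP[_ ->]].
    by rewrite -Hpl Ep !vsum_cat !vsum2 Exy.
  split.
    apply/orP; left; rewrite /adeg Ep !count_cat /= (negbTE Hxa1) (negbTE Hxa2).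
    exact: ar2.
  move=> x; rewrite (mem_rem_uniq _ ocU) inE => /andP[Hxv /mapP[j Hj Ex]].
  apply/mapP; exists j.
    by move: Hj; rewrite /q Ep !size_cat.
  rewrite Ex Ep /q; apply: take_swap => //.
  by apply: contraNneq Hxv => Ej; rewrite Ex /v Ej Ep.
-
  move=> sig Hu [Hsub [q [/andP[Hq /eqP Hql] [Hlt Hsq]]]].
  have Hqs : size q = size p.
    by apply/eqP; rewrite -(eqn_pmul2r d0) -(vdeg_vsum Hq) Hql Hdl.
  suff : size sig <= (size p).-2.
    by move: k2; case: (size p) => [|[|k]] // _ /=; apply: ar3.
  rewrite leqNgt; apply/negP => Hbig.
  have Hsz : size (open_chain p) <= size sig.
    by rewrite size_map size_iota; move: Hbig k2; case: (size p) => [|[|k]] //=.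
  have [_ Hmem] := uniq_min_size Hu Hsub Hsz.
  have Epq : p = q.
    apply: prefix_eq => // j.
    case: (posnP j) => [->|j0]; first by rewrite !take0.
    case: (ltnP j (size p)) => jk; last first.
      by rewrite !take_oversize ?Hqs // Hpl Hql.
    have : vsum (take j p) \in open_chain q.
      apply: Hsq; rewrite Hmem; apply/mapP; exists j => //; rewrite mem_iota; exact: ar4.
    case/(open_chainP d0 Hq) => j' [j'0 j'k E].
    have : vdeg (vsum (take j p)) = vdeg (vsum (take j' q)) by rewrite E.
    rewrite (vdeg_take Hp (ltnW jk)) (vdeg_take Hq (ltnW j'k)).
    by move/eqP; rewrite eqn_pmul2r // => /eqP Ej; rewrite E Ej.
  by move: Hlt; rewrite -Epq /facet_lt ltnn seqlt_irr andbF.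
Qed.
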